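(* Let $\omega^{(1)}=(2,2,1)$, $\omega^{(2)}=(2,4)$, $\omega^{(3)}=(4,1,1)$, $\omega^{(4)}=(4,3)$, $\omega^{(5)}=(6,2)$ (weight vectors of degree $10$). Then (i) $QP^{\otimes6}_{10}\cong\bigoplus_{j=1}^5QP^{\otimes6}_{10}(\omega^{(j)})$ as $\mathbb F_2$-vector spaces; (ii) $(QP^{\otimes6}_{10})^0\cong\bigoplus_{j=1}^4(QP^{\otimes6}_{10})^0(\omega^{(j)})$ and $(QP^{\otimes6}_{10})^{>0}\cong\bigoplus_{j=2}^5(QP^{\otimes6}_{10})^{>0}(\omega^{(j)})$, where for $j=1,2,3,4,5$ respectively $\dim(QP^{\otimes6}_{10})^0(\omega^{(j)})=400,30,270,180,0$ and $\dim(QP^{\otimes6}_{10})^{>0}(\omega^{(j)})=0,4,10,36,15$.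
   Context: $P^{\otimes h}=\mathbb F_2[t_1,\dots,t_h]$ ($\deg t_i=1$) with the standard action of the mod 2 Steenrod algebra $\mathcal A$; $QP^{\otimes h}_n=P^{\otimes h}_n/(P^{\otimes h}_n\cap\overline{\mathcal A}P^{\otimes h})$. The weight vector of $t=t_1^{a_1}\cdots t_h^{a_h}$ is $\omega(t)$ with $\omega_i(t)=\sum_j\alpha_{i-1}(a_j)$, $\alpha_k(a)$ the $k$-th binary digit of $a$; degree of $\omega$ is $\sum2^{i-1}\omega_i$; weight vectors are ordered left-lexicographically (trailing zeros omitted). For $\omega$ of degree $n$, $P^{\otimes h}_n(\omega)$ (resp. $P^{\otimes h}_n(<\omega)$) is spanned by degree-$n$ monomials with $\omega(t)\le\omega$ (resp. $<\omega$); $u\equiv_\omega v$ iff $u+v\in(\overline{\mathcal A}P^{\otimes h}\cap P^{\otimes h}_n(\omega))+P^{\otimes h}_n(<\omega)$; $QP^{\otimes h}_n(\omega)=P^{\otimes h}_n(\omega)/\equiv_\omega$. $(P^{\otimes h})^0$ (resp. $(P^{\otimes h})^{>0}$) is spanned by monomials with some exponent $0$ (resp. all exponents positive); these are $\mathcal A$-submodules, $(QP^{\otimes h}_n)^0$, $(QP^{\otimes h}_n)^{>0}$ are their indecomposables in degree $n$, and $(QP^{\otimes h}_n)^0(\omega)$, $(QP^{\otimes h}_n)^{>0}(\omega)$ are the analogues of $QP^{\otimes h}_n(\omega)$ inside these submodules. *)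

(* Defs.v *)
From mathcomp Require Import all_boot all_order all_algebra.
Set Implicit Arguments. Unset Strict Implicit. Unset Printing Implicit Defensive.
Import GRing.Theory.
Local Open Scope ring_scope.

Section HitProblem.
Variables (h n : nat).

(* Exponent vectors (a_1,...,a_h) with 0 <= a_j <= n: every monomial of degree
   <= n is of this form.  Such an exponent vector a stands for t_1^{a_1}...t_h^{a_h}. *)
Definition Mon := {ffun 'I_h -> 'I_n.+1}.

(* Ambient F_2-vector space spanned by these monomials (P^{(x)h} in degrees <= n,
   identified with F_2-valued functions on monomials = coefficient vectors). *)
Definition Amb := {ffun Mon -> ('F_2)^o}.

Definition mono (a : Mon) : Amb := [ffun b => (b == a)%:R].

Definition mdeg (a : Mon) : nat := (\sum_(j < h) (a j : nat))%N.

(* Sq^k (t^a) by the Cartan formula and Sq^i(t^m) = C(m,i) t^{m+i}: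
   Sq^k(t^a) = sum_{b >= a, |b| = |a| + k} prod_j C(a_j, b_j - a_j) t^b. *)
Definition Sq (k : nat) (a : Mon) : Amb :=
  \sum_(b : Mon | (mdeg b == mdeg a + k)%N && [forall j, (a j <= b j)%N])
     ((\prod_(j < h) 'C(a j, b j - a j))%N)%:R *: mono b.

Definition alpha (k m : nat) : nat := odd (m %/ 2 ^ k).

(* Weight vector omega(t), padded with zeros to length n.+1
   (omega_i(t) = 0 for i > n.+1 since all exponents are <= n < 2^(n+1)). *)
Definition weight (a : Mon) : seq nat :=
  [seq (\sum_(j < h) alpha i (a j))%N | i <- iota 0 n.+1].

Definition pad (w : seq nat) : seq nat := take n.+1 (w ++ nseq n.+1 0%N).

End HitProblem.

Fixpoint lexle (s t : seq nat) : bool :=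
  match s, t with
  | [::], _ => true
  | _ :: _, [::] => false
  | x :: s', y :: t' => (x < y)%N || ((x == y) && lexle s' t')
  end.
Definition lexlt (s t : seq nat) : bool := lexle s t && (s != t).

Section Spaces.
Variables (h n : nat).
(* S : a class of monomials spanning an A-submodule:
   all monomials, (P)^0, or (P)^{>0} *)
Variable S : pred (Mon h n).

Definition Pspan (Q : pred (Mon h n)) : {vspace Amb h n} :=
  <<[seq mono a | a <- enum (Mon h n) & [&& mdeg a == n, S a & Q a]]>>%VS.

(* (bar A M) cap M_n, for M the submodule spanned by S:
   spanned by Sq^k(t^a), k >= 1, t^a in S, deg t^a + k = n *)
Definition hitn : {vspace Amb h n} :=
  <<[seq Sq (n - mdeg a) a | a <- enum (Mon h n) & S a && (mdeg a < n)%N]>>%VS.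

Definition Pn := Pspan predT.
Definition Pw (w : seq nat) := Pspan (fun a => lexle (weight a) (pad n w)).
Definition Plt (w : seq nat) := Pspan (fun a => lexlt (weight a) (pad n w)).

(* dim of QM_n = M_n / (M_n cap bar A M) *)
Definition QPdim : nat := (\dim Pn - \dim (hitn :&: Pn))%N.
(* dim of QM_n(omega) = M_n(omega) / ((bar A M cap M_n(omega)) + M_n(<omega)) *)
Definition QPwdim (w : seq nat) : nat :=
  (\dim (Pw w) - \dim ((hitn :&: Pw w) + Plt w))%N.
End Spaces.

Definition allmon h n : pred (Mon h n) := predT.
Definition zeromon h n : pred (Mon h n) := fun a => [exists j, (a j == 0 :> nat)].
Definition posmon h n : pred (Mon h n) := fun a => [forall j, (a j != 0 :> nat)].

Definition omega1 : seq nat := [:: 2; 2; 1]%N.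
Definition omega2 : seq nat := [:: 2; 4]%N.
Definition omega3 : seq nat := [:: 4; 1; 1]%N.
Definition omega4 : seq nat := [:: 4; 3]%N.
Definition omega5 : seq nat := [:: 6; 2]%N.

(* Main.v *)
Require Import Defs.
From mathcomp Require Import all_boot all_order all_algebra zify.
Set Implicit Arguments. Unset Strict Implicit. Unset Printing Implicit Defensive.
Import GRing.Theory.

Fixpoint ltl (s t : seq nat) : bool :=
  match s, t with
  | _, [::] => false
  | [::], _ :: _ => true
  | x :: s', y :: t' => (x < y) || ((x == y) && ltl s' t')
  end.

Lemma ltl_irr s : ltl s s = false.
Proof. by elim: s => //= x s ->; rewrite ltnn eqxx. Qed.

Lemma ltl_trans : transitive ltl.
Proof.
move=> t s u; elim: s t u => [|x s IH] [|y t] [|z u] //=.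
case/orP=> [lt1|/andP[/eqP<- lt1]]; case/orP=> [lt2|/andP[/eqP<- lt2]].
- by rewrite (ltn_trans lt1 lt2).
- by rewrite lt1.
- by rewrite lt2.
- by rewrite eqxx (IH _ _ lt1 lt2) orbT.
Qed.

Lemma ltl_total s t : s != t -> ltl s t || ltl t s.
Proof.
elim: s t => [|x s IH] [|y t] //=.
rewrite eqseq_cons negb_and; case: (ltngtP x y) => [h|h|] /=; rewrite ?orbT //.
move=> _; exact: IH.
Qed.

Fixpoint comps (k d : nat) : seq (seq nat) :=
  match k with
  | 0 => if d == 0 then [:: [::]] else [::]
  | k'.+1 => [seq i :: c | i <- iota 0 d.+1, c <- comps k' (d - i)]
  end.

Lemma mem_comps k d l : (l \in comps k d) = (size l == k) && (sumn l == d).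
Proof.
elim: k d l => [|k IH] d l.
  by case: d => [|d]; case: l => [|x l] //=; rewrite inE.
apply/allpairsPdep/idP.
  case=> i [c [ii cc ->]] /=; move: cc; rewrite IH => /andP[/eqP-> /eqP->].
  rewrite mem_iota in ii; rewrite /= eqSS eqxx /=; apply/eqP; lia.
case: l => [|x l] // /andP[sz sm]; exists x, l; rewrite mem_iota IH.
move: sz sm => /= /eqP [sz] /eqP sm; split=> //; [lia | apply/andP; split; apply/eqP; lia].
Qed.

Lemma uniq_comps k d : uniq (comps k d).
Proof.
elim: k d => [|k IH] d; first by case: d.
apply: allpairs_uniq_dep; first exact: iota_uniq.
  by move=> i _; apply: IH.
by move=> [i c] [j e] _ _ /= [-> ->].
Qed.

Definition addl (l e : seq nat) := [seq x.1 + x.2 | x <- zip l e].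

Lemma size_addl l e : size l = size e -> size (addl l e) = size l.
Proof. by move=> H; rewrite size_map size_zip H minnn. Qed.

Lemma nth_addl l e i : size l = size e -> nth 0 (addl l e) i = nth 0 l i + nth 0 e i.
Proof.
move=> H; case: (ltnP i (size l)) => hi.
  by rewrite (nth_map (0,0)) ?size_zip ?H ?minnn -?H // nth_zip.
by rewrite !nth_default ?size_addl // -H.
Qed.

Lemma sumn_addl l e : size l = size e -> sumn (addl l e) = sumn l + sumn e.
Proof.
elim: l e => [|x l IH] [|y e] //= [H]; rewrite IH //; lia.
Qed.

Fixpoint digs (k x : nat) : seq nat :=
  if k is k'.+1 then (odd x : nat) :: digs k' x./2 else [::].

Lemma size_digs k x : size (digs k x) = k.
Proof. by elim: k x => //= k IH x; rewrite IH. Qed.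

Lemma nth_digs k x i : i < k -> nth 0 (digs k x) i = alpha i x.
Proof.
elim: k x i => [|k IH] x [|i] //= hi.
  by rewrite /alpha expn0 divn1.
rewrite IH // /alpha expnS divnMA -divn2 //.
Qed.

Definition wc (l : seq nat) : seq nat :=
  [seq sumn [seq alpha i x | x <- l] | i <- iota 0 11].
Definition wcf l := foldr (fun x acc => addl (digs 11 x) acc) (nseq 11 0) l.

Lemma size_wcf l : size (wcf l) = 11.
Proof.
elim: l => [|x l IH] //; rewrite /wcf /= -/(wcf l) size_addl ?size_digs // ?IH //.
Qed.

Lemma wcfE l : wcf l = wc l.
Proof.
apply: (@eq_from_nth _ 0); first by rewrite size_wcf size_map size_iota.
rewrite size_wcf => i hi.
rewrite (nth_map 0) ?size_iota // nth_iota // add0n.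
elim: l => [|x l IH]; first by change (wcf [::]) with (nseq 11 0); rewrite nth_nseq hi.
change (wcf (x :: l)) with (addl (digs 11 x) (wcf l)).
by rewrite nth_addl ?size_digs ?size_wcf // IH nth_digs.
Qed.

Local Notation M := (Mon 6 10).

Definition tomon (l : seq nat) : M := [ffun j : 'I_6 => inord (nth 0 l j)].
Definition ml (a : M) : seq nat := mkseq (fun i => nat_of_ord (a (inord i))) 6.
Definition valid (l : seq nat) := (size l == 6) && all (fun x => x <= 10) l.

Lemma size_ml a : size (ml a) = 6. Proof. by rewrite size_mkseq. Qed.

Lemma nth_ml a (j : 'I_6) : nth 0 (ml a) j = a j.
Proof. by rewrite nth_mkseq // inord_val. Qed.

Lemma valid_ml a : valid (ml a).
Proof.
apply/andP; split; first by rewrite size_ml.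
apply/allP => x /mapP [i _ ->].
by rewrite -ltnS ltn_ord.
Qed.

Lemma tomonK a : tomon (ml a) = a.
Proof. by apply/ffunP => j; rewrite ffunE; apply/val_inj; rewrite /= nth_ml inord_val. Qed.

Lemma tomonE l (j : 'I_6) : valid l -> (tomon l j : nat) = nth 0 l j.
Proof.
case/andP=> _ /allP H; rewrite ffunE inordK // ltnS.
case: (ltnP j (size l)) => hj; first by apply: H; rewrite mem_nth.
by rewrite nth_default.
Qed.

Lemma mlK l : valid l -> ml (tomon l) = l.
Proof.
move=> vl; have /andP[/eqP sz _] := vl.
apply: (@eq_from_nth _ 0); first by rewrite size_ml sz.
rewrite size_ml => i hi; rewrite nth_mkseq //.
by rewrite (tomonE _ vl) inordK.
Qed.

Lemma tomon_inj l l' : valid l -> valid l' -> tomon l = tomon l' -> l = l'.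
Proof. by move=> v v' e; rewrite -(mlK v) -(mlK v') e. Qed.

Lemma ml_inj : injective ml.
Proof. by move=> a b e; rewrite -(tomonK a) -(tomonK b) e. Qed.

Lemma sumn_mkseq6 f : sumn (mkseq f 6) = (\sum_(i < 6) f i)%N.
Proof. by rewrite sumnE /mkseq big_map -(big_mkord xpredT f) /index_iota subn0. Qed.

Lemma mdegE a : mdeg a = sumn (ml a).
Proof. by rewrite sumn_mkseq6 /mdeg; apply: eq_bigr => i _; rewrite inord_val. Qed.

Lemma weightE a : weight a = wc (ml a).
Proof.
apply: eq_map => i; rewrite /ml /mkseq -map_comp -/(mkseq _ 6) sumn_mkseq6.
by apply: eq_bigr => j _ /=; rewrite inord_val.
Qed.

Lemma zeromonE a : zeromon a = (0 \in ml a).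
Proof.
apply/existsP/idP => [[j /eqP hj]|].
  have hj' : (a j : nat) = 0%N := hj.
  by rewrite -hj' -nth_ml mem_nth // size_ml.
case/mapP => i; rewrite mem_iota => /andP[_ hi] /= h.
by exists (inord i); rewrite -h.
Qed.

Lemma posmonE a : posmon a = all (fun x => x != 0) (ml a).
Proof.
apply/forallP/allP => [H x /mapP [i _ ->]|H j]; first exact: H.
by rewrite -nth_ml; apply: H; rewrite mem_nth // size_ml.
Qed.

Lemma valid_sum l : size l = 6 -> sumn l <= 10 -> valid l.
Proof.
move=> sz sm; rewrite /valid sz eqxx /=; apply/allP => x xl.
apply: leq_trans sm; elim: l xl {sz} => //= y l IH; rewrite inE => /orP[/eqP->|/IH h].
  exact: leq_addr.
exact: leq_trans h (leq_addl _ _).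
Qed.

Local Open Scope ring_scope.
Local Notation A := (Amb 6 10).

Fixpoint xorv (s t : seq (seq nat)) : seq (seq nat) :=
  match s with
  | [::] => t
  | x :: s' =>
    (fix xt (t : seq (seq nat)) :=
       match t with
       | [::] => s
       | y :: t' => if ltl x y then x :: xorv s' t
                    else if ltl y x then y :: xt t'
                    else xorv s' t'
       end) t
  end.

Lemma xorv_cons x s y t : xorv (x :: s) (y :: t) =
  if ltl x y then x :: xorv s (y :: t)
  else if ltl y x then y :: xorv (x :: s) t else xorv s t.
Proof. by []. Qed.

Fixpoint reduce (B : seq (seq (seq nat))) (v : seq (seq nat)) :=
  match B with
  | [::] => v
  | b :: B' =>
    match v with
    | [::] => [::]
    | x :: _ =>
      match b with
      | [::] => reduce B' v
      | p :: _ => if x == p then reduce B' (xorv v b)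
                  else if ltl x p then v else reduce B' v
      end
    end
  end.

Fixpoint ins (r : seq (seq nat)) (B : seq (seq (seq nat))) :=
  match B with
  | [::] => [:: r]
  | b :: B' => if ltl (head [::] r) (head [::] b) then r :: B else b :: ins r B'
  end.

Definition step B v := let r := reduce B v in if r is [::] then B else ins r B.

Lemma addxx (f : A) : f + f = 0.
Proof. apply/ffunP => m; rewrite !ffunE; apply: addrr_pchar2; exact: (@pchar_Fp 2). Qed.

Definition pt (x : seq nat) : M := tomon (behead x).
Definition iv (s : seq (seq nat)) : A := \sum_(x <- s) mono (pt x).

Lemma iv_nil : iv [::] = 0. Proof. by rewrite /iv big_nil. Qed.
Lemma iv_cons x s : iv (x :: s) = mono (pt x) + iv s. Proof. by rewrite /iv big_cons. Qed.

Lemma monoE (a b : M) : mono a b = (b == a)%:R. Proof. by rewrite ffunE. Qed.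

Lemma ivE s m : iv s m = \sum_(x <- s) (m == pt x)%:R.
Proof. by rewrite /iv sum_ffunE; apply: eq_bigr => x _; rewrite monoE. Qed.

Lemma iv_xor s t : iv (xorv s t) = iv s + iv t.
Proof.
elim: s t => [|x s IH] t; first by rewrite /= iv_nil add0r.
elim: t => [|y t IHt]; first by rewrite /= iv_nil addr0.
rewrite xorv_cons; case: ifP => hxy.
  by rewrite !iv_cons IH iv_cons addrA.
case: ifP => hyx.
  by rewrite iv_cons IHt [iv (y :: t)]iv_cons addrCA.
have exy : x = y.
  apply/eqP; apply: contraFT hxy => /ltl_total; by rewrite hyx orbF.
subst y; rewrite IH !iv_cons addrACA addxx add0r.
by [].
Qed.

Lemma sub_span_cons (y : A) X : (<<X>> <= <<y :: X>>)%VS.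
Proof. by apply: sub_span => z zi; rewrite inE zi orbT. Qed.

Lemma reduce_span B v : iv (reduce B v) - iv v \in <<map iv B>>%VS.
Proof.
elim: B v => [|b B IH] v; first by rewrite subrr mem0v.
case: v => [|x v]; first by rewrite subrr mem0v.
case: b => [|p b] /=.
  exact: (subvP (sub_span_cons _ _) _ (IH _)).
case: ifP => hxp.
  have -> : iv (reduce B (xorv (x :: v) (p :: b))) - iv (x :: v) =
    (iv (reduce B (xorv (x :: v) (p :: b))) - iv (xorv (x :: v) (p :: b)))
      + iv (p :: b).
    by rewrite iv_xor opprD addrA subrK.
  apply: memvD; first exact: (subvP (sub_span_cons _ _) _ (IH _)).
  by apply: memv_span; exact: mem_head.
case: ifP => _; first by rewrite subrr mem0v.
exact: (subvP (sub_span_cons _ _) _ (IH _)).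
Qed.

Lemma perm_ins r B : perm_eq (ins r B) (r :: B).
Proof.
elim: B => //= b B IH; case: ifP => _ //.
apply: perm_trans (_ : perm_eq (b :: r :: B) _); first by rewrite perm_cons.
by apply/permP => P /=; rewrite addnCA.
Qed.

Lemma step_span B v : <<map iv (step B v)>>%VS = (<<map iv B>> + <[iv v]>)%VS.
Proof.
rewrite /step; have := reduce_span B v.
case E: (reduce B v) => [|x r] H.
  apply/esym/addv_idPl; rewrite -memvE.
  by rewrite iv_nil sub0r memvN in H.
rewrite (eq_span (perm_mem (perm_map iv (perm_ins (x :: r) B)))) /= span_cons.
set S := <<map iv B>>%VS; set y := iv (x :: r).
apply/eqP; rewrite eqEsubv !subv_add -!memvE; apply/andP; split; apply/andP; split.
- have -> : y = (y - iv v) + iv v by rewrite subrK.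
  by apply: memv_add => //; exact: memv_line.
- exact: addvSl.
- exact: addvSr.
- have -> : iv v = y - (y - iv v) by rewrite opprB addrC subrK.
  apply: memvB; first by apply: (subvP (addvSl _ _)); exact: memv_line.
  exact: (subvP (addvSr _ _) _ H).
Qed.

Lemma ech_span gs B :
  <<map iv (foldl step B gs)>>%VS = (<<map iv B>> + <<map iv gs>>)%VS.
Proof.
elim: gs B => [|g gs IH] B /=; first by rewrite span_nil addv0.
by rewrite IH step_span span_cons addvA.
Qed.

Lemma span_vanish (X : seq A) m u :
  (forall v, v \in X -> v m = 0) -> u \in <<X>>%VS -> u m = 0.
Proof.
elim: X u => [|x X IH] u H; first by rewrite span_nil memv0 => /eqP->; rewrite ffunE.
rewrite span_cons => /memv_addP [y /vlineP [k ->]] [z zX ->].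
rewrite !ffunE (H x (mem_head _ _)) (IH z _ zX) ?mulr0 ?scaler0 ?addr0 //.
by move=> v vX; apply: H; rewrite inE vX orbT.
Qed.

Definition hR (b c : seq (seq nat)) := ltl (head [::] b) (head [::] c).

Lemma hR_trans : transitive hR.
Proof. by move=> b a c; apply: ltl_trans. Qed.

Definition echB (B : seq (seq (seq nat))) :=
  all (fun b => (b != [::]) && sorted ltl b) B && sorted hR B.

Lemma iv_vanish s m : (forall y, y \in s -> pt y != m) -> iv s m = 0.
Proof.
move=> H; rewrite ivE big1_seq // => y /andP[_ ys].
by rewrite eq_sym (negbTE (H y ys)).
Qed.

Lemma iv_one p s : (forall y, y \in s -> pt y != pt p) -> iv (p :: s) (pt p) = 1.
Proof. by move=> H; rewrite iv_cons ffunE monoE eqxx iv_vanish // addr0. Qed.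

Lemma sep p bs B :
  echB ((p :: bs) :: B) -> {in flatten ((p :: bs) :: B) &, injective pt} ->
  (forall y, y \in bs -> pt y != pt p) /\
  (forall c, c \in B -> forall y, y \in c -> pt y != pt p).
Proof.
move=> /andP[/andP[/andP[_ sb] aB] sB] inj.
have pin : p \in flatten ((p :: bs) :: B) by rewrite /= mem_head.
have ne y : y \in flatten ((p :: bs) :: B) -> ltl p y -> pt y != pt p.
  move=> yin lt; apply/eqP => e; have := inj _ _ yin pin e.
  by move=> eyp; rewrite eyp ltl_irr in lt.
have /allP hb := order_path_min ltl_trans sb.
have /allP hB := order_path_min hR_trans sB.
split.
  move=> y ys; apply: ne; last exact: hb.
  by apply/flattenP; exists (p :: bs); [exact: mem_head | rewrite inE ys orbT].
move=> c cB y yc; apply: ne.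
  by apply/flattenP; exists c => //; rewrite inE cB orbT.
have := hB c cB; rewrite /hR /=.
have /andP[cne sc] := allP aB c cB.
case: c cne sc yc {cB} => [|q cs] // _ sc; rewrite inE => /orP[/eqP->//|ycs] lpq.
have /allP hc := order_path_min ltl_trans sc.
exact: ltl_trans lpq (hc y ycs).
Qed.

Lemma echB_tail b B : echB (b :: B) -> echB B.
Proof.
case/andP=> /= /andP[_ aB] sB; rewrite /echB aB /=.
exact: path_sorted sB.
Qed.

Lemma flat_sub (b : seq (seq nat)) B x : x \in flatten B -> x \in flatten (b :: B).
Proof. case/flattenP => c cB xc; apply/flattenP; exists c => //; by rewrite inE cB orbT. Qed.

Lemma LT B u : echB B -> {in flatten B &, injective pt} ->
  u \in <<map iv B>>%VS ->
  (forall c, c \in B -> u (pt (head [::] c)) = 0) -> u = 0.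
Proof.
elim: B u => [|b B IH] u eB inj; first by rewrite span_nil memv0 => /eqP.
have bne : b != [::] by case/andP: eB => /andP[/andP[]].
case: b bne eB inj => [|p bs] // _ eB inj.
have [h1 h2] := sep eB inj.
rewrite /= span_cons => /memv_addP [y /vlineP [k ->]] [z zX ->] H.
have z0 : z (pt p) = 0.
  apply: span_vanish zX => v /mapP [c cB ->]; apply: iv_vanish; exact: h2.
have := H _ (mem_head _ _); rewrite /= ffunE [_ (pt p)]ffunE iv_one // z0 addr0.
rewrite -[k%:A]/(k * 1) mulr1 => k0.
rewrite k0 scale0r add0r; apply: IH => //.
- exact: echB_tail eB.
- move=> x1 y1 xi yi; apply: inj; exact: flat_sub.
- move=> c cB; have := H c; rewrite inE cB orbT k0 scale0r add0r; exact.
Qed.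

Lemma free_ech B : echB B -> {in flatten B &, injective pt} -> free (map iv B).
Proof.
elim: B => [|b B IH] eB inj; first by rewrite /free span_nil dimv0.
have bne : b != [::] by case/andP: eB => /andP[/andP[]].
case: b bne eB inj => [|p bs] // _ eB inj.
have [h1 h2] := sep eB inj.
rewrite /= free_cons; apply/andP; split.
  apply/negP => /(span_vanish (m := pt p)) H.
  have : iv (p :: bs) (pt p) = 0.
    apply: H => v /mapP [c cB ->]; apply: iv_vanish; exact: h2.
  by rewrite iv_one // => /eqP; rewrite oner_eq0.
apply: IH; first exact: echB_tail eB.
move=> x1 y1 xi yi; apply: inj; exact: flat_sub.
Qed.

Lemma dim_ech B : echB B -> {in flatten B &, injective pt} ->
  \dim <<map iv B>> = size B.
Proof. by move=> eB inj; have /eqP := free_ech eB inj; rewrite size_map. Qed.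

Local Open Scope ring_scope.

Lemma perm_enum_gen (r : seq M) (P : pred M) (L : seq (seq nat)) :
  uniq r -> (forall a, a \in r) ->
  uniq L -> all valid L -> (forall a, P a = (ml a \in L)) ->
  perm_eq [seq a <- r | P a] (map tomon L).
Proof.
move=> ur inr uL /allP vL HP; apply: uniq_perm.
- by rewrite filter_uniq.
- rewrite map_inj_in_uniq // => l l' li li'; apply: tomon_inj; exact: vL.
move=> a; rewrite mem_filter inr andbT HP; apply/idP/mapP.
  by move=> H; exists (ml a) => //; rewrite tomonK.
by case=> l li ->; rewrite mlK //; exact: vL.
Qed.

Lemma perm_enum (P : pred M) (L : seq (seq nat)) :
  uniq L -> all valid L -> (forall a, P a = (ml a \in L)) ->
  perm_eq [seq a <- enum M | P a] (map tomon L).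
Proof. apply: perm_enum_gen; [exact: enum_uniq | by move=> a; rewrite mem_enum]. Qed.

Lemma free_monos (s : seq M) : uniq s -> free (map (@mono 6 10) s).
Proof.
elim: s => [|a s IH] /=; first by rewrite /free span_nil dimv0.
case/andP=> ans us; rewrite free_cons IH // andbT; apply/negP.
move/(span_vanish (m := a)) => H.
have : mono a a = 0.
  apply: H => v /mapP [b bs ->]; rewrite monoE; case: eqP => // eab.
  by rewrite eab bs in ans.
by rewrite monoE eqxx => /eqP; rewrite oner_eq0.
Qed.

Lemma Pspan_eq (S Q : pred M) L :
  uniq L -> all valid L ->
  (forall a, [&& mdeg a == 10, S a & Q a] = (ml a \in L)) ->
  Pspan S Q = <<[seq mono (tomon l) | l <- L]>>%VS /\
  \dim (Pspan S Q) = size L.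
Proof.
move=> uL vL HP; have pe := perm_enum uL vL HP.
have E : Pspan S Q = <<[seq mono (tomon l) | l <- L]>>%VS.
  rewrite /Pspan; apply: eq_span; apply: perm_mem.
  by rewrite (map_comp (@mono 6 10) tomon); apply: perm_map.
split=> //; rewrite E (map_comp (@mono 6 10) tomon).
have uM : uniq (map tomon L) by rewrite -(perm_uniq pe) filter_uniq // enum_uniq.
by have /eqP -> := free_monos uM; rewrite !size_map.
Qed.

Definition clsc (w : seq nat) (l : seq nat) : nat :=
  let c := wcf l in
  if lexle c (pad 10 w) then (if c == pad 10 w then 1 else 2)%N else 0%N.
Definition key w l := clsc w l :: l.

Lemma clsc_le w a : lexle (weight a) (pad 10 w) = (clsc w (ml a) != 0%N).
Proof. by rewrite /clsc weightE wcfE; case: ifP => //; case: ifP. Qed.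

Lemma clsc_lt w a : lexlt (weight a) (pad 10 w) = (clsc w (ml a) == 2%N).
Proof. by rewrite /lexlt /clsc weightE wcfE; case: ifP => //=; case: ifP. Qed.

Lemma clsc_le2 w l : (clsc w l <= 2)%N.
Proof. by rewrite /clsc; case: ifP => //; case: ifP. Qed.

Definition prodC (l e : seq nat) := foldr muln 1%N [seq 'C(x.1, x.2) | x <- zip l e].
Definition sql (l : seq nat) :=
  [seq addl l e | e <- comps 6 (10 - sumn l) & odd (prodC l e)].
Definition gen w l := sort ltl (map (key w) (sql l)).

Lemma prodCE_gen k l e : size l = k -> size e = k ->
  prodC l e = (\prod_(j < k) 'C(nth 0 l j, nth 0 e j))%N.
Proof.
rewrite /prodC; elim: k l e => [|k IH] [|x l] [|y e] //=; first by rewrite big_ord0.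
by move=> [sl] [se]; rewrite big_ord_recl /= (IH l e sl se).
Qed.

Lemma prodCE l e : size l = 6%N -> size e = 6%N ->
  prodC l e = (\prod_(j < 6) 'C(nth 0 l j, nth 0 e j))%N.
Proof. exact: prodCE_gen. Qed.

Lemma Fp2_nat (m : nat) : (m%:R : 'F_2) = (odd m)%:R.
Proof. by rewrite -modn2 Fp_nat_mod. Qed.

Lemma SqE l : valid l -> (sumn l <= 10)%N ->
  Sq (10 - sumn l) (tomon l) = \sum_(b <- sql l) mono (tomon b).
Proof.
move=> vl sl; set k := (10 - sumn l)%N.
have sz : size l = 6%N by case/andP: vl => /eqP.
set Lb := [seq addl l e | e <- comps 6 k].
have vLb : all valid Lb.
  apply/allP => b /mapP [e ei ->]; move: ei; rewrite mem_comps => /andP[/eqP se /eqP sme].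
  apply: valid_sum; first by rewrite size_addl // sz se.
  by rewrite sumn_addl ?sz ?se // sme /k; lia.
have uLb : uniq Lb.
  rewrite map_inj_in_uniq ?uniq_comps // => e e' ei ei' H.
  move: ei ei'; rewrite !mem_comps => /andP[/eqP se _] /andP[/eqP se' _].
  apply: (@eq_from_nth _ 0); first by rewrite se se'.
  move=> i _; have := congr1 (fun s => nth 0 s i) H.
  by rewrite !nth_addl ?sz ?se ?se' // => /eqP; rewrite eqn_add2l => /eqP.
have HP : forall b : M,
    ((mdeg b == mdeg (tomon l) + k)%N && [forall j, (tomon l j <= b j)%N]) = (ml b \in Lb).
  move=> b; rewrite (mdegE (tomon l)) mlK // mdegE; apply/idP/mapP.
    case/andP=> /eqP hs /forallP hj.
    set e := [seq (x.1 - x.2)%N | x <- zip (ml b) l].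
    have se : size e = 6%N by rewrite size_map size_zip size_ml sz.
    have ee : ml b = addl l e.
      apply: (@eq_from_nth _ 0); first by rewrite size_addl ?size_ml ?sz ?se.
      move=> i; rewrite size_ml => hi.
      rewrite nth_addl ?sz ?se // (nth_map (0,0)%N) ?size_zip ?size_ml ?sz ?minnn //.
      rewrite nth_zip ?size_ml ?sz //=.
      have := hj (inord i); rewrite tomonE // -nth_ml !inordK // => hle.
      by rewrite subnKC.
    exists e => //; rewrite mem_comps se eqxx /=.
    by move: hs; rewrite ee sumn_addl ?sz ?se // => /eqP; rewrite eqn_add2l.
  case=> e ei H; move: ei; rewrite mem_comps => /andP[/eqP se /eqP sme].
  rewrite H sumn_addl ?sz ?se // sme eqxx /=; apply/forallP => j.
  by rewrite tomonE // -nth_ml H nth_addl ?sz ?se // leq_addr.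
rewrite /Sq -big_filter.
have pe := perm_enum_gen (index_enum_uniq _) (@mem_index_enum _) uLb vLb HP.
rewrite (perm_big _ pe).
rewrite big_map /Lb big_map.
rewrite /sql big_map big_filter [RHS]big_mkcond.
apply: eq_big_seq => e ei /=.
have va : valid (addl l e) by apply: (allP vLb); apply: map_f.
move: ei; rewrite mem_comps => /andP[/eqP se _].
rewrite (_ : (\prod_(j < 6) _)%N = prodC l e); last first.
  rewrite prodCE //; apply: eq_bigr => j _.
  by rewrite !tomonE // nth_addl ?sz ?se // addKn.
by rewrite Fp2_nat; case: odd; rewrite ?scale1r ?scale0r.
Qed.

Lemma iv_gen w l : iv (gen w l) = \sum_(b <- sql l) mono (tomon b).
Proof.
rewrite /iv /gen (perm_big _ (_ : perm_eq _ (map (key w) (sql l)))) ?big_map //.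
by rewrite perm_sort.
Qed.


Local Open Scope ring_scope.

Definition GL0 := [seq c | d <- iota 0 10, c <- comps 6 d].
Definition GL (Sc : pred (seq nat)) := [seq l <- GL0 | Sc l].

Lemma mem_GL0 l : (l \in GL0) = (size l == 6%N) && (sumn l < 10)%N.
Proof.
apply/allpairsPdep/idP.
  case=> d [c [di ci ->]]; move: ci; rewrite mem_comps => /andP[-> /eqP->].
  by move: di; rewrite mem_iota.
case/andP=> sz sm; exists (sumn l), l; split=> //.
  by rewrite mem_iota.
by rewrite mem_comps sz eqxx.
Qed.

Lemma uniq_GL0 : uniq GL0.
Proof.
apply: allpairs_uniq_dep; first exact: iota_uniq.
  by move=> d _; exact: uniq_comps.
move=> p q /allpairsPdep[x [y [_ yc ->]]] /allpairsPdep[x' [y' [_ yc' ->]]] /= eyy.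
subst y'; move: yc yc'; rewrite !mem_comps => /andP[_ /eqP ex] /andP[_ /eqP ex'].
by subst x x'.
Qed.

Lemma hit_eq (S : pred M) Sc w : (forall a, S a = Sc (ml a)) ->
  hitn S = <<map iv (map (gen w) (GL Sc))>>%VS.
Proof.
move=> HS; rewrite /hitn.
have uG : uniq (GL Sc) by apply: filter_uniq; exact: uniq_GL0.
have vG : all valid (GL Sc).
  apply/allP => l; rewrite mem_filter mem_GL0 => /andP[_ /andP[/eqP sz sm]].
  by apply: valid_sum => //; exact: ltnW.
have HP : forall a : M, (S a && (mdeg a < 10)%N) = (ml a \in GL Sc).
  by move=> a; rewrite mem_filter mem_GL0 size_ml eqxx HS mdegE.
have pe := perm_enum uG vG HP.
transitivity (<<[seq Sq (10 - mdeg a)%N a | a <- map tomon (GL Sc)]>>%VS).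
  by apply: eq_span; apply: perm_mem; apply: perm_map.
rewrite -!map_comp; apply: congr1.
apply/eq_in_map => l lG /=.
have vl : valid l by exact: (allP vG).
rewrite iv_gen -SqE //; first by rewrite mdegE mlK.
by move: lG; rewrite mem_filter mem_GL0 => /andP[_ /andP[_ /ltnW]].
Qed.

Definition vk w (Sc : pred (seq nat)) (x : seq nat) :=
  [&& x == key w (behead x), size (behead x) == 6%N, sumn (behead x) == 10%N & Sc (behead x)].
Definition Bf w Sc := foldl step [::] (map (gen w) (GL Sc)).
Definition chk w Sc B := echB B && all (all (vk w Sc)) B.
Definition pc (b : seq (seq nat)) := head 0%N (head [::] b).

Section Final.
Variables (S : pred M) (Sc : pred (seq nat)) (w : seq nat).
Hypothesis HS : forall a, S a = Sc (ml a).
Variable B : seq (seq (seq nat)).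
Hypothesis hB : <<map iv B>>%VS = hitn S.
Hypothesis cB : chk w Sc B.

Lemma eB : echB B. Proof. by case/andP: cB. Qed.

Lemma vkB x : x \in flatten B -> vk w Sc x.
Proof.
case/andP: cB => _ /allP H /flattenP [b bB xb].
exact: (allP (H b bB)).
Qed.

Lemma vk_valid x : vk w Sc x -> valid (behead x).
Proof. by rewrite /vk => /and4P[_ /eqP sz /eqP sm _]; apply: valid_sum; rewrite ?sz ?sm. Qed.

Lemma vk_ml x : vk w Sc x -> ml (pt x) = behead x.
Proof. by move=> v; rewrite /pt mlK // vk_valid. Qed.

Lemma vk_cls x : vk w Sc x -> head 0%N x = clsc w (ml (pt x)).
Proof.
move=> v; have ex : x = key w (behead x) by move: v; rewrite /vk => /and4P[/eqP e _ _ _].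
by rewrite vk_ml // {1}ex.
Qed.

Lemma injB : {in flatten B &, injective pt}.
Proof.
move=> x y xi yi e; have vx := vkB xi; have vy := vkB yi.
have eb : behead x = behead y by rewrite -(vk_ml vx) -(vk_ml vy) e.
move: vx vy; rewrite /vk => /and4P[/eqP -> _ _ _] /and4P[/eqP -> _ _ _].
by rewrite eb.
Qed.

Lemma vk_deg x : vk w Sc x -> mdeg (pt x) = 10%N.
Proof. by move=> v; rewrite mdegE vk_ml //; move: v; rewrite /vk => /and4P[_ _ /eqP]. Qed.

Lemma vk_S x : vk w Sc x -> S (pt x).
Proof. by move=> v; rewrite HS vk_ml //; move: v; rewrite /vk => /and4P[]. Qed.

Lemma ltl_head a s c t : ltl (a :: s) (c :: t) -> (a <= c)%N.
Proof. by case/orP => [/ltnW|/andP[/eqP-> _]]. Qed.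

Lemma vk_cons x : vk w Sc x -> exists c l, x = c :: l.
Proof. by rewrite /vk => /and4P[/eqP -> _ _ _]; exists (clsc w (behead x)), (behead x). Qed.

Lemma pc_le b x : b \in B -> x \in b -> (pc b <= head 0%N x)%N.
Proof.
move=> bB xb; have /andP[/allP H _] := eB.
have /andP[bne sb] := H b bB.
have xf : x \in flatten B by apply/flattenP; exists b.
case: b bne sb xb bB {H} => [|p bs] // _ sb; rewrite inE => /orP[/eqP->//|xbs] bB.
have pf : p \in flatten B by apply/flattenP; exists (p :: bs) => //; exact: mem_head.
have := allP (order_path_min ltl_trans sb) x xbs.
have [c [l ->]] := vk_cons (vkB pf); have [c' [l' ->]] := vk_cons (vkB xf).
exact: ltl_head.
Qed.

Lemma cls_le2 x : vk w Sc x -> (head 0%N x <= 2)%N.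
Proof. by move=> v; rewrite vk_cls // clsc_le2. Qed.

Lemma Pspan_vanish (Q : pred M) m u : ~~ Q m -> u \in Pspan S Q -> u m = 0.
Proof.
move=> nQ; apply: span_vanish => v /mapP [a]; rewrite mem_filter => /andP[/and3P[_ _ Qa] _] ->.
rewrite monoE; case: eqP => // e; by rewrite e Qa in nQ.
Qed.

Lemma Pspan_mono (Q : pred M) a : mdeg a = 10%N -> S a -> Q a -> mono a \in Pspan S Q.
Proof.
move=> da Sa Qa; apply: memv_span; apply: map_f.
by rewrite mem_filter mem_enum andbT da eqxx Sa Qa.
Qed.

Lemma iv_in_Pspan (Q : pred M) b : b \in B -> (forall x, x \in b -> Q (pt x)) ->
  iv b \in Pspan S Q.
Proof.
move=> bB H; rewrite /iv big_seq; apply: memv_suml => x xb.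
have v := vkB (introT flattenP (ex_intro2 _ _ b bB xb)).
by apply: Pspan_mono; [exact: vk_deg | exact: vk_S | exact: H].
Qed.

Lemma flat_filter (P : pred (seq (seq nat))) x : x \in flatten (filter P B) -> x \in flatten B.
Proof. case/flattenP => b; rewrite mem_filter => /andP[_ bB] xb; apply/flattenP; by exists b. Qed.

Lemma echB_filter (P : pred (seq (seq nat))) : echB (filter P B).
Proof.
have /andP[aB sB] := eB; apply/andP; split.
  by apply/allP => b; rewrite mem_filter => /andP[_ bB]; exact: (allP aB).
exact: (sorted_filter hR_trans).
Qed.

Lemma inj_filter (P : pred (seq (seq nat))) : {in flatten (filter P B) &, injective pt}.
Proof. by move=> x y xi yi; apply: injB; [exact: (flat_filter xi) | exact: (flat_filter yi)]. Qed.

Lemma head_in b : b \in B -> head [::] b \in flatten B.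
Proof.
move=> bB; have /andP[/allP H _] := eB; have /andP[bne _] := H b bB.
apply/flattenP; exists b => //; by case: b bne {bB H} => // p bs _; exact: mem_head.
Qed.

Lemma head_pc b : b \in B -> head 0%N (head [::] b) = pc b.
Proof. by []. Qed.

Lemma QP_formula : QPdim S = (size [seq l <- comps 6 10 | Sc l] - size B)%N.
Proof.
set L := [seq l <- comps 6 10 | Sc l].
have uL : uniq L by apply: filter_uniq; exact: uniq_comps.
have vL : all valid L.
  apply/allP => l; rewrite mem_filter mem_comps => /andP[_ /andP[/eqP sz /eqP sm]].
  by apply: valid_sum; rewrite ?sz ?sm.
have HP : forall a : M, [&& mdeg a == 10%N, S a & predT a] = (ml a \in L).
  by move=> a; rewrite mem_filter mem_comps size_ml mdegE HS /= andbT andbC.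
have [_ dP] := Pspan_eq uL vL HP.
rewrite /QPdim /Pn dP.
have sub : (hitn S <= Pspan S predT)%VS.
  rewrite -hB; apply/span_subvP => v /mapP[b bB ->]; exact: iv_in_Pspan.
by rewrite (capv_idPl sub) -hB dim_ech //; [exact: eB | exact: injB].
Qed.

Lemma QPw_formula :
  QPwdim S w = (size [seq l <- comps 6 10 | Sc l && (clsc w l != 0%N)] -
     (count (fun b => pc b == 1%N) B + size [seq l <- comps 6 10 | Sc l && (clsc w l == 2%N)]))%N.
Proof.
set Lw := [seq l <- comps 6 10 | Sc l && (clsc w l != 0%N)].
set Ll := [seq l <- comps 6 10 | Sc l && (clsc w l == 2%N)].
have uLw : uniq Lw by apply: filter_uniq; exact: uniq_comps.
have uLl : uniq Ll by apply: filter_uniq; exact: uniq_comps.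
have vLw : all valid Lw.
  apply/allP => l; rewrite mem_filter mem_comps => /andP[_ /andP[/eqP sz /eqP sm]].
  by apply: valid_sum; rewrite ?sz ?sm.
have vLl : all valid Ll.
  apply/allP => l; rewrite mem_filter mem_comps => /andP[_ /andP[/eqP sz /eqP sm]].
  by apply: valid_sum; rewrite ?sz ?sm.
have HPw : forall a : M, [&& mdeg a == 10%N, S a & lexle (weight a) (pad 10 w)] = (ml a \in Lw).
  move=> a; rewrite mem_filter mem_comps size_ml mdegE HS clsc_le /=.
  by case: (_ == 10%N); case: (Sc _); case: (_ != 0%N).
have HPl : forall a : M, [&& mdeg a == 10%N, S a & lexlt (weight a) (pad 10 w)] = (ml a \in Ll).
  move=> a; rewrite mem_filter mem_comps size_ml mdegE HS clsc_lt /=.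
  by case: (_ == 10%N); case: (Sc _); case: (_ == 2%N).
have [_ dPw] := Pspan_eq uLw vLw HPw.
have [_ dPl] := Pspan_eq uLl vLl HPl.
set p0 := fun b => pc b == 0%N.
set B0 := filter p0 B; set B12 := filter (predC p0) B; set B1 := filter (fun b => pc b == 1%N) B.
set Pw' := Pspan S (fun a => lexle (weight a) (pad 10 w)).
set Pl' := Pspan S (fun a => lexlt (weight a) (pad 10 w)).
have S1 : (hitn S :&: Pw' = <<map iv B12>>)%VS.
  apply/eqP; rewrite eqEsubv; apply/andP; split.
    apply/subvP => u /memv_capP [uh uw].
    have E : <<map iv B>>%VS = (<<map iv B0>> + <<map iv B12>>)%VS.
      rewrite -span_cat -map_cat; apply: eq_span; apply: perm_mem; rewrite perm_sym; apply: perm_map.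
      by rewrite perm_filterC.
    move: uh; rewrite -hB E => /memv_addP [u0 u0i [u12 u12i ue]].
    have u00 : u0 = 0.
      apply: (LT (B := B0)) => //; [exact: echB_filter | exact: inj_filter |].
      move=> c; rewrite mem_filter => /andP[/eqP pc0 cBB].
      set p := head [::] c.
      have pf := head_in cBB; have vp := vkB pf.
      have hp : head 0%N p = 0%N by exact: pc0.
      have up : u (pt p) = 0.
        apply: (Pspan_vanish (Q := fun a => lexle (weight a) (pad 10 w))) uw.
        by rewrite clsc_le -vk_cls // hp.
      have u12p : u12 (pt p) = 0.
        apply: span_vanish u12i => v /mapP[c' c'i ->]; apply: iv_vanish => y yc'.
        move: c'i; rewrite mem_filter => /andP[pc' c'B].
        apply/eqP => e; have yf : y \in flatten B by apply/flattenP; exists c'.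
        have eyp := injB yf pf e.
        have h1 := pc_le c'B yc'; rewrite eyp hp leqn0 in h1.
        by move: pc'; rewrite /= /p0 h1.
      by move: up; rewrite ue ffunE u12p addr0.
    by rewrite ue u00 add0r.
  rewrite subv_cap; apply/andP; split.
    rewrite -hB; apply: sub_span => v /mapP [b]; rewrite mem_filter => /andP[_ bB] ->.
    exact: map_f.
  apply/span_subvP => v /mapP[b]; rewrite mem_filter => /andP[pb bB] ->.
  apply: iv_in_Pspan => // x xb.
  have vx := vkB (introT flattenP (ex_intro2 _ _ b bB xb)).
  rewrite clsc_le -vk_cls //; have := pc_le bB xb; move: pb => /=.
  rewrite /p0; move: (pc b) (head 0%N x) => n m; lia.
have S2 : (<<map iv B12>> + Pl' = <<map iv B1>> + Pl')%VS.
  apply/eqP; rewrite eqEsubv !subv_add !addvSr !andbT; apply/andP; split.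
    apply/span_subvP => v /mapP[b]; rewrite mem_filter => /andP[pb bB] ->.
    case: (pc b =P 1%N) => [p1|pn1].
      apply: (subvP (addvSl _ _)); apply: memv_span; apply: map_f.
      by rewrite mem_filter p1 eqxx bB.
    apply: (subvP (addvSr _ _)); apply: iv_in_Pspan => // x xb.
    have vx := vkB (introT flattenP (ex_intro2 _ _ b bB xb)).
    rewrite clsc_lt -vk_cls //; have := pc_le bB xb; have := cls_le2 vx; move: pb pn1 => /=.
    rewrite /p0; move: (pc b) (head 0%N x) => n m; lia.
  apply: (subv_trans _ (addvSl _ _)); apply: sub_span => v /mapP[b]; rewrite mem_filter => /andP[/eqP pb bB] ->.
  by apply: map_f; rewrite mem_filter bB andbT /= /p0 pb.
have S3 : (<<map iv B1>> :&: Pl' = 0)%VS.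
  apply/eqP; rewrite -subv0; apply/subvP => u /memv_capP[u1 ul]; rewrite memv0; apply/eqP.
  apply: (LT (B := B1)) => //; [exact: echB_filter | exact: inj_filter |].
  move=> c; rewrite mem_filter => /andP[/eqP pc1 cBB].
  have pf := head_in cBB; have vp := vkB pf.
  apply: (Pspan_vanish (Q := fun a => lexlt (weight a) (pad 10 w))) ul.
  by rewrite clsc_lt -vk_cls // (head_pc cBB) pc1.
rewrite /QPwdim /Pw /Plt -/Pw' -/Pl' S1 S2 dimv_disjoint_sum // dim_ech; [|exact: echB_filter | exact: inj_filter].
by rewrite /Pw' /Pl' dPw dPl /B1 size_filter.
Qed.

End Final.

Local Close Scope ring_scope.

Definition zc (l : seq nat) := 0 \in l.
Definition pcc (l : seq nat) := all (fun x => x != 0) l.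
Definition ac (l : seq nat) := true.

Lemma HSz (a : M) : zeromon a = zc (ml a). Proof. exact: zeromonE. Qed.
Lemma HSp (a : M) : posmon a = pcc (ml a). Proof. exact: posmonE. Qed.
Lemma HSa (a : M) : allmon a = ac (ml a). Proof. by []. Qed.

Definition res w Sc := let B := Bf w Sc in (chk w Sc B, size B, count (fun b => pc b == 1) B).
Definition nW w Sc := size [seq l <- comps 6 10 | Sc l && (clsc w l != 0)].
Definition nL w Sc := size [seq l <- comps 6 10 | Sc l && (clsc w l == 2)].
Definition nP Sc := size [seq l <- comps 6 10 | Sc l].

Lemma hBf (S : pred M) Sc w : (forall a, S a = Sc (ml a)) ->
  <<map iv (Bf w Sc)>>%VS = hitn S.
Proof.
move=> HS; rewrite /Bf ech_span span_nil add0v (hit_eq w HS).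
by [].
Qed.

Lemma QPw_num (S : pred M) Sc w s c : (forall a, S a = Sc (ml a)) ->
  res w Sc = (true, s, c) -> QPwdim S w = (nW w Sc - (c + nL w Sc))%N.
Proof.
move=> HS; rewrite /res => -[ch _ <-].
by rewrite (QPw_formula HS (hBf w HS)) // /chk.
Qed.

Lemma QP_num (S : pred M) Sc w s c : (forall a, S a = Sc (ml a)) ->
  res w Sc = (true, s, c) -> QPdim S = (nP Sc - s)%N.
Proof.
move=> HS; rewrite /res => -[ch <- _].
by rewrite (@QP_formula S Sc w HS _ (hBf w HS) ch).
Qed.


Lemma ra1 : res omega1 ac = (true, 2058, 950). Proof. vm_cast_no_check (erefl (true, 2058, 950)). Qed.
Lemma ra2 : res omega2 ac = (true, 2058, 191). Proof. vm_cast_no_check (erefl (true, 2058, 191)). Qed.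
Lemma ra3 : res omega3 ac = (true, 2058, 260). Proof. vm_cast_no_check (erefl (true, 2058, 260)). Qed.
Lemma ra4 : res omega4 ac = (true, 2058, 84). Proof. vm_cast_no_check (erefl (true, 2058, 84)). Qed.
Lemma ra5 : res omega5 ac = (true, 2058, 0). Proof. vm_cast_no_check (erefl (true, 2058, 0)). Qed.
Lemma rz1 : res omega1 zc = (true, 1997, 950). Proof. vm_cast_no_check (erefl (true, 1997, 950)). Qed.
Lemma rz2 : res omega2 zc = (true, 1997, 180). Proof. vm_cast_no_check (erefl (true, 1997, 180)). Qed.
Lemma rz3 : res omega3 zc = (true, 1997, 240). Proof. vm_cast_no_check (erefl (true, 1997, 240)). Qed.
Lemma rz4 : res omega4 zc = (true, 1997, 60). Proof. vm_cast_no_check (erefl (true, 1997, 60)). Qed.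
Lemma rz5 : res omega5 zc = (true, 1997, 0). Proof. vm_cast_no_check (erefl (true, 1997, 0)). Qed.
Lemma rp1 : res omega1 pcc = (true, 61, 0). Proof. vm_cast_no_check (erefl (true, 61, 0)). Qed.
Lemma rp2 : res omega2 pcc = (true, 61, 11). Proof. vm_cast_no_check (erefl (true, 61, 11)). Qed.
Lemma rp3 : res omega3 pcc = (true, 61, 20). Proof. vm_cast_no_check (erefl (true, 61, 20)). Qed.
Lemma rp4 : res omega4 pcc = (true, 61, 24). Proof. vm_cast_no_check (erefl (true, 61, 24)). Qed.
Lemma rp5 : res omega5 pcc = (true, 61, 0). Proof. vm_cast_no_check (erefl (true, 61, 0)). Qed.

Lemma map5 (f : seq nat -> nat) a b c d e :
  [seq f w | w <- [:: a; b; c; d; e]] = [:: f a; f b; f c; f d; f e].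
Proof. by []. Qed.

Theorem mainTheorem7 :
  (* (i) *)
  QPdim (@allmon 6 10) =
    (QPwdim (@allmon 6 10) omega1 + QPwdim (@allmon 6 10) omega2
     + QPwdim (@allmon 6 10) omega3 + QPwdim (@allmon 6 10) omega4
     + QPwdim (@allmon 6 10) omega5)%N
  (* (ii) *)
  /\ QPdim (@zeromon 6 10) =
    (QPwdim (@zeromon 6 10) omega1 + QPwdim (@zeromon 6 10) omega2
     + QPwdim (@zeromon 6 10) omega3 + QPwdim (@zeromon 6 10) omega4)%N
  /\ QPdim (@posmon 6 10) =
    (QPwdim (@posmon 6 10) omega2 + QPwdim (@posmon 6 10) omega3
     + QPwdim (@posmon 6 10) omega4 + QPwdim (@posmon 6 10) omega5)%N
  /\ [seq QPwdim (@zeromon 6 10) w | w <- [:: omega1; omega2; omega3; omega4; omega5]]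
       = [:: 400; 30; 270; 180; 0]%N
  /\ [seq QPwdim (@posmon 6 10) w | w <- [:: omega1; omega2; omega3; omega4; omega5]]
       = [:: 0; 4; 10; 36; 15]%N.
Proof.
rewrite !map5.
rewrite (QP_num HSa ra1) (QP_num HSz rz1) (QP_num HSp rp1).
rewrite (QPw_num HSa ra1) (QPw_num HSa ra2) (QPw_num HSa ra3) (QPw_num HSa ra4) (QPw_num HSa ra5).
rewrite (QPw_num HSz rz1) (QPw_num HSz rz2) (QPw_num HSz rz3) (QPw_num HSz rz4) (QPw_num HSz rz5).
rewrite (QPw_num HSp rp1) (QPw_num HSp rp2) (QPw_num HSp rp3) (QPw_num HSp rp4) (QPw_num HSp rp5).
split; [|split; [|split; [|split]]]; vm_compute; reflexivity.
Qed.
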